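(* Let $s \geq 2$ and let $b_1,\dots,b_s \geq 2$ be pairwise coprime integers, $B = b_1\cdots b_s$, $B^{(i)} = B/b_i$, and $\tau_i = \min\{1 \leq k < B^{(i)} : b_i^k \equiv 1 \pmod{B^{(i)}}\}$ for $i=1,\dots,s$. Let $m \geq B$ be an integer, $y_i = \sum_{j=1}^m b_i^{-j\tau_i}$ and $\boldsymbol{y} = (y_1,\dots,y_s)$. For a vector $\boldsymbol{r} = (r_1,\dots,r_s)$ of positive integers put $B_{\boldsymbol{r}} = \prod_{i=1}^s b_i^{r_i}$ and let $M_{i,\boldsymbol{r}}$ be an integer with $M_{i,\boldsymbol{r}}\, (B_{\boldsymbol{r}} b_i^{-r_i}) \equiv 1 \pmod{b_i^{r_i}}$. For $\boldsymbol{k} = (k_1,\dots,k_s) \in \{1,\dots,m\}^s$ write $\boldsymbol{\tau}\cdot\boldsymbol{k} = (\tau_1k_1,\dots,\tau_sk_s)$, and for an integer $\ell\ge1$ write $\boldsymbol{\tau}\ell = (\tau_1\ell,\dots,\tau_s\ell)$. Let $A_{\boldsymbol{k}} \in [0, B_{\boldsymbol{\tau}\cdot\boldsymbol{k}})$ be the integer with \[ A_{\boldsymbol{k}} \equiv -\sum_{i=1}^s M_{i,\boldsymbol{\tau}\cdot\boldsymbol{k}}\, B_{\boldsymbol{\tau}\cdot\boldsymbol{k}}\, b_i^{-1} \pmod{B_{\boldsymbol{\tau}\cdot\boldsymbol{k}}}, \] and let $\tilde{y}_m \in [0, B_{\boldsymbol{\tau}(m+1)})$ be the integer with \[ \tilde{y}_m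 \equiv \sum_{i=1}^s M_{i,\boldsymbol{\tau}(m+1)}\, B_{\boldsymbol{\tau}(m+1)}\, b_i^{-\tau_i(m+1)} \sum_{j=1}^{m+1} b_i^{j\tau_i - 1} \pmod{B_{\boldsymbol{\tau}(m+1)}}. \] Define \[ \alpha_m := \frac{1}{B_{\boldsymbol{\tau}m}} \sum_{N=1}^{B_{\boldsymbol{\tau}m}} \Delta\big(\boldsymbol{y},(H_s(n))_{n=\tilde{y}_m}^{\tilde{y}_m + N -1}\big). \] Then \[ \alpha_m = \sum_{1 \leq k_1, \ldots, k_s \leq m} \Big(\frac{1}{2} - \frac{A_{\boldsymbol{k}}}{B_{\boldsymbol{\tau} \cdot \boldsymbol{k}}}-\frac{1}{2 B_{\boldsymbol{\tau} \cdot \boldsymbol{k}}}\Big). \]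
   Context: For an integer $b \geq 2$, the radical inverse function is $\phi_b(n) = \sum_{j\geq 0} n_j b^{-j-1}$ where $n=\sum_{j\ge0} n_j b^j$, $n_j\in\{0,\dots,b-1\}$. The $s$-dimensional Halton sequence in bases $b_1,\dots,b_s$ is $H_s(n) = (\phi_{b_1}(n),\dots,\phi_{b_s}(n))$, $n\in\mathbb{N}_0$. For integers $a \geq 0$, $N\geq1$ and $\boldsymbol{y}=(y_1,\dots,y_s)$, $\Delta(\boldsymbol{y},(H_s(n))_{n=a}^{a+N-1}) = \sum_{n=a}^{a+N-1}\big(\chi_{[0,y_1)\times\cdots\times[0,y_s)}(H_s(n)) - y_1\cdots y_s\big)$. *)

(* Defs.v *)
(* all quantities are rational, so we work in [rat]. *)
From HB Require Import structures.
From mathcomp Require Import all_boot all_order all_algebra.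
Set Implicit Arguments. Unset Strict Implicit. Unset Printing Implicit Defensive.
Import Order.TTheory GRing.Theory Num.Theory.
Local Open Scope ring_scope.

Definition digit (b n j : nat) : nat := (n %/ b ^ j %% b)%N.

(* radical inverse phi_b(n) = sum_{j>=0} n_j b^{-j-1}.  For b >= 2 all digits
   n_j with j > n vanish, so summing over j < n.+1 is the full sum. *)
Definition radinv (b n : nat) : rat :=
  \sum_(j < n.+1) (digit b n j)%:R / (b ^ j.+1)%:R.

Definition halton (s : nat) (b : 'I_s -> nat) (n : nat) : 'I_s -> rat :=
  fun i => radinv (b i) n.

Definition Delta (s : nat) (b : 'I_s -> nat) (y : 'I_s -> rat) (a N : nat) : rat :=
  \sum_(a <= n < a + N)
     ((if [forall i, (0 <= halton b n i) && (halton b n i < y i)] then 1 else 0)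
      - \prod_(i < s) y i).

Definition Bprod (s : nat) (b : 'I_s -> nat) : nat := (\prod_(i < s) b i)%N.

Definition Bexc (s : nat) (b : 'I_s -> nat) (i : 'I_s) : nat := (Bprod b %/ b i)%N.

(* tau_i = min { 1 <= k < B^(i) : b_i^k = 1 mod B^(i) } (0 if the set is empty) *)
Definition tau (s : nat) (b : 'I_s -> nat) (i : 'I_s) : nat :=
  head 0%N [seq k <- iota 1 (Bexc b i).-1 | b i ^ k == 1 %[mod Bexc b i]].

Definition yvec (s : nat) (b : 'I_s -> nat) (m : nat) : 'I_s -> rat :=
  fun i => \sum_(1 <= j < m.+1) ((b i ^ (j * tau b i))%:R)^-1.

Definition Bpow (s : nat) (b : 'I_s -> nat) (r : 'I_s -> nat) : nat :=
  (\prod_(i < s) b i ^ r i)%N.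

Definition tauk (s : nat) (b : 'I_s -> nat) (k : 'I_s -> nat) : 'I_s -> nat :=
  fun i => (tau b i * k i)%N.
Definition taul (s : nat) (b : 'I_s -> nat) (l : nat) : 'I_s -> nat :=
  fun i => (tau b i * l)%N.

Definition Mspec (s : nat) (b : 'I_s -> nat) (M : 'I_s -> ('I_s -> nat) -> int) :=
  forall r : 'I_s -> nat, (forall i, (0 < r i)%N) ->
    forall i, (M i r * (Bpow b r %/ b i ^ r i)%N%:Z == 1 %[mod (b i ^ r i)%N%:Z])%Z.

Definition Acoef (s : nat) (b : 'I_s -> nat) (M : 'I_s -> ('I_s -> nat) -> int)
    (k : 'I_s -> nat) : nat :=
  let r := tauk b k in
  absz ((- \sum_(i < s) M i r * (Bpow b r %/ b i)%N%:Z) %% (Bpow b r)%:Z)%Z.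

Definition ytilde (s : nat) (b : 'I_s -> nat) (M : 'I_s -> ('I_s -> nat) -> int)
    (m : nat) : nat :=
  let r := taul b m.+1 in
  absz ((\sum_(i < s) M i r * (Bpow b r %/ b i ^ (tau b i * m.+1))%N%:Z
            * (\sum_(1 <= j < m.+2) (b i ^ (j * tau b i - 1))%N%:Z))
        %% (Bpow b r)%:Z)%Z.

Definition alpha (s : nat) (b : 'I_s -> nat) (M : 'I_s -> ('I_s -> nat) -> int)
    (m : nat) : rat :=
  let BB := Bpow b (taul b m) in
  (BB%:R)^-1 * \sum_(1 <= N < BB.+1) Delta b (yvec b m) (ytilde b M m) N.

(* Main.v *)
Require Import Defs.
From HB Require Import structures.
From mathcomp Require Import all_boot all_order all_algebra.
From mathcomp Require Import cyclic.
From mathcomp Require Import zify ring lra.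
Import Order.TTheory GRing.Theory Num.Theory.
Local Open Scope ring_scope.

Definition rad' (b n K : nat) : rat :=
  \sum_(j < K) (digit b n j)%:R / (b ^ j.+1)%:R.

Lemma digitS b n j : digit b n j.+1 = digit b (n %/ b) j.
Proof. by rewrite /digit expnS divnMA. Qed.

Lemma rad'S b n K : (0 < b)%N ->
  rad' b n K.+1 = ((n %% b)%:R + rad' b (n %/ b) K) / b%:R.
Proof.
move=> b0; rewrite /rad' big_ord_recl /= /digit expn0 divn1 expn1.
rewrite mulrDl; congr (_ + _).
rewrite mulr_suml; apply: eq_bigr => j _.
rewrite /bump leq0n add1n expnS divnMA !expnS natrM.
have hb : (b%:R : rat) != 0 by rewrite pnatr_eq0 -lt0n b0.
have hj : ((b * b ^ j)%:R : rat) != 0 by rewrite pnatr_eq0 -lt0n muln_gt0 expn_gt0 b0.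
by rewrite -mulrA -invfM [X in _ / X]mulrC.
Qed.

Lemma rad'_stab b n K K' : (0 < b)%N -> (n < b ^ K)%N -> (K <= K')%N -> rad' b n K' = rad' b n K.
Proof.
move=> b0 hn hK; rewrite /rad' -!(big_mkord xpredT (fun j => (digit b n j)%:R / (b ^ j.+1)%:R)).
rewrite (big_cat_nat (leq0n K) hK) /= [X in _ + X]big1_seq ?addr0 //.
move=> j /andP [_]; rewrite mem_index_iota => /andP [h1 h2].
rewrite /digit divn_small ?mod0n ?mul0r //.
apply: (leq_trans hn); exact: leq_pexp2l.
Qed.

Lemma rad'_eq b n K K' : (0 < b)%N -> (n < b ^ K)%N -> (n < b ^ K')%N ->
  rad' b n K = rad' b n K'.
Proof.
move=> b0 h1 h2; case: (leqP K K') => hK.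
  by rewrite (@rad'_stab _ _ _ _ b0 h1 hK).
by rewrite (@rad'_stab _ _ _ _ b0 h2 (ltnW hK)).
Qed.

Lemma radinv_rec b n : (1 < b)%N ->
  radinv b n = ((n %% b)%:R + radinv b (n %/ b)) / b%:R.
Proof.
move=> b1; have b0 : (0 < b)%N by apply: ltnW.
rewrite /radinv -/(rad' b n n.+1) -/(rad' b (n %/ b) (n %/ b).+1) rad'S //.
rewrite (@rad'_eq b (n %/ b) n (n %/ b).+1) //.
  by apply: (leq_ltn_trans (leq_div n b)); apply: ltn_expl.
apply: (ltn_trans (ltn_expl _ b1)); rewrite ltn_exp2l //.
Qed.

Lemma rad'_ge0 b n K : 0 <= rad' b n K.
Proof. by apply: sumr_ge0 => j _; apply: divr_ge0; apply: ler0n. Qed.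

Lemma rad'_lt1 b n K : (0 < b)%N -> rad' b n K < 1.
Proof.
move=> b0; elim: K n => [|K IH] n; first by rewrite /rad' big_ord0.
rewrite rad'S // ltr_pdivrMr ?ltr0n // mul1r.
have h1 := IH (n %/ b)%N.
have h2 : ((n %% b).+1 <= b)%N by rewrite ltn_pmod.
have h3 : ((n %% b).+1%:R <= (b%:R : rat)) by rewrite ler_nat.
rewrite -addn1 natrD in h3. lra.
Qed.

Lemma radinv_ge0 b n : 0 <= radinv b n.
Proof. exact: rad'_ge0. Qed.
Lemma radinv_lt1 b n : (0 < b)%N -> radinv b n < 1.
Proof. exact: rad'_lt1. Qed.

Definition yd (b : nat) (d : nat -> bool) (L : nat) : rat :=
  \sum_(q < L) (d q)%:R / (b ^ q.+1)%:R.
Definition cd (b : nat) (d : nat -> bool) (p : nat) : nat :=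
  (\sum_(q < p) d q * b ^ q)%N.
Definition cnt (b : nat) (d : nat -> bool) (L n : nat) : nat :=
  (\sum_(p < L | d p) (n %% b ^ p.+1 == cd b d p))%N.

Lemma yd_rec b d L : (0 < b)%N ->
  yd b d L.+1 = ((d 0%N)%:R + yd b (fun q => d q.+1) L) / b%:R.
Proof.
move=> b0; rewrite /yd big_ord_recl /= expn1.
rewrite mulrDl; congr (_ + _).
rewrite mulr_suml; apply: eq_bigr => j _.
rewrite /bump leq0n add1n !expnS natrM.
have hb : (b%:R : rat) != 0 by rewrite pnatr_eq0 -lt0n b0.
by rewrite -mulrA -invfM [X in _ / X]mulrC.
Qed.

Lemma yd_ge0 b d L : 0 <= yd b d L.
Proof. by apply: sumr_ge0 => j _; apply: divr_ge0; apply: ler0n. Qed.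

Lemma yd_lt1 b d L : (1 < b)%N -> yd b d L < 1.
Proof.
move=> b1; have b0 : (0 < b)%N by apply: ltnW.
elim: L d => [|L IH] d; first by rewrite /yd big_ord0.
rewrite yd_rec // ltr_pdivrMr ?ltr0n // mul1r.
have h1 := IH (fun q => d q.+1).
have h3 : (2%:R <= (b%:R : rat)) by rewrite ler_nat.
have h4 : ((d 0%N)%:R <= (1 : rat)) by case: (d 0%N).
lra.
Qed.

Lemma cd_rec b d p : cd b d p.+1 = (d 0%N + b * cd b (fun q => d q.+1) p)%N.
Proof.
rewrite /cd big_ord_recl /= expn0 muln1; congr (_ + _)%N.
rewrite big_distrr /=; apply: eq_bigr => j _.
by rewrite /bump leq0n add1n expnS mulnCA.
Qed.

Lemma modnM2 n b c : (0 < b)%N -> (0 < c)%N ->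
  (n %% (b * c) = n %% b + b * (n %/ b %% c))%N.
Proof.
move=> b0 c0.
rewrite {1}(divn_eq n b) {1}(divn_eq (n %/ b) c).
set r := (n %/ b %% c)%N; set q := (n %/ b %/ c)%N; set x := (n %% b)%N.
have hr : (r < c)%N by rewrite ltn_mod.
have hx : (x < b)%N by rewrite ltn_mod.
rewrite mulnDl -mulnA [(c * b)%N]mulnC -addnA modnMDl modn_small; first lia.
nia.
Qed.

Lemma eq_digit_split b x r d c : (x < b)%N -> (d < b)%N ->
  ((x + b * r == d + b * c)%N = (x == d) && (r == c)).
Proof.
move=> hx hd; apply/idP/idP.
  move/eqP=> h.
  have e1 : x = d.
    have := congr1 (fun z => z %% b)%N h.
    by rewrite /= ![(b * _)%N]mulnC !(addnC _ (_ * b)) !modnMDl !modn_small.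
  subst d; move: h => /eqP; rewrite eqn_add2l eqn_mul2l.
  case/orP => [/eqP b0|->]; last by rewrite eqxx.
  by subst b.
by move=> /andP [/eqP -> /eqP ->].
Qed.

Lemma cnt_rec b d L n : (1 < b)%N ->
  cnt b d L.+1 n = ((d 0%N && (n %% b == 0)%N) +
                    (n %% b == d 0%N)%N * cnt b (fun q => d q.+1) L (n %/ b))%N.
Proof.
move=> b1; have b0 : (0 < b)%N by apply: ltnW.
rewrite /cnt !big_mkcond big_ord_recl /= expn1 /cd big_ord0.
congr (_ + _)%N; first by case: (d 0%N).
rewrite [X in (_ * X)%N]big_mkcond big_distrr /=; apply: eq_bigr => j _.
rewrite /bump leq0n add1n.
case: (d j.+1) => //; last by rewrite muln0.
rewrite -/(cd b d j.+1) cd_rec expnS modnM2 ?expn_gt0 ?b0 //.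
rewrite eq_digit_split ?ltn_mod //; last by case: (d 0%N).
by case: (_ == _)%N; case: (_ == _)%N.
Qed.

Lemma lt_split (x c : nat) (u v : rat) : 0 <= u < 1 -> 0 <= v < 1 ->
  (x%:R + u < c%:R + v) = (x < c)%N || ((x == c) && (u < v)).
Proof.
move=> /andP [u0 u1] /andP [v0 v1].
case: (ltngtP x c) => h /=.
- apply/idP; have : (x.+1 <= c)%N by []. rewrite -(ler_nat rat) -addn1 natrD. lra.
- apply/negbTE; rewrite -leNgt.
  have : (c.+1 <= x)%N by []. rewrite -(ler_nat rat) -addn1 natrD. lra.
- by subst c; rewrite ltrD2l.
Qed.

Lemma key_cnt b d L n : (1 < b)%N ->
  nat_of_bool (radinv b n < yd b d L) = cnt b d L n.
Proof.
move=> b1; have b0 : (0 < b)%N by apply: ltnW.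
elim: L d n => [|L IH] d n.
  by rewrite /yd /cnt !big_ord0 ltNge radinv_ge0.
rewrite cnt_rec // -IH radinv_rec // yd_rec // ltr_pM2r ?invr_gt0 ?ltr0n //.
rewrite lt_split ?radinv_ge0 ?radinv_lt1 ?yd_ge0 ?yd_lt1 //.
set P := (radinv _ _ < _).
by case: (d 0%N) => /=; case: (n %% b)%N => [|[|k]] /=; case: P.
Qed.

Lemma reidx (R : Type) (idx : R) (op : Monoid.com_law idx) (F : nat -> R) t K :
  (0 < t)%N ->
  \big[op/idx]_(p < K * t | (t %| p.+1)%N) F p = \big[op/idx]_(k < K) F (t * k.+1).-1.
Proof.
case: t => // t _.
elim: K => [|K IH]; first by rewrite !big_ord0.
rewrite big_ord_recr /= -IH.
rewrite -!(big_mkord (fun p => (t.+1 %| p.+1)%N) F).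
rewrite mulSn addnC (@big_cat_nat _ _ _ (K * t.+1)) ?leq_addr //=.
congr (op _ _).
have -> : (K * t.+1 + t.+1 = (K * t.+1 + t).+1)%N by rewrite addnS.
rewrite big_mkcond big_nat_recr /=; last by rewrite leq_addr.
rewrite big1_seq ?Monoid.mul1m.
  rewrite (_ : (t.+1 %| (K * t.+1 + t).+1)%N); last first.
    by rewrite -addnS dvdn_add ?dvdn_mull.
  congr F; lia.
move=> p /andP [_]; rewrite mem_index_iota => /andP [h1 h2].
case: ifP => // /dvdnP [q hq].
exfalso.
have : (K < q)%N.
  rewrite -(ltn_pmul2r (ltn0Sn t)) -hq; lia.
have : (q < K.+1)%N.
  rewrite -(ltn_pmul2r (ltn0Sn t)) -hq; lia.
lia.
Qed.

Definition dt (t : nat) : nat -> bool := fun q => (t %| q.+1)%N.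
Definition cc (bi t k : nat) : nat := cd bi (dt t) (t * k.+1).-1.

Lemma yd_dt bi t m : (0 < t)%N ->
  yd bi (dt t) (m * t) = \sum_(k < m) ((bi ^ (t * k.+1))%:R)^-1.
Proof.
move=> t0; rewrite /yd.
rewrite (eq_bigr (fun q : 'I_(m * t) => if dt t q then ((bi ^ q.+1)%:R)^-1 else 0)); last first.
  by move=> q _; case: (dt t q); rewrite ?mul1r ?mul0r.
rewrite -big_mkcond /= (@reidx _ _ _ (fun q => ((bi ^ q.+1)%:R)^-1) t m) //.
apply: eq_bigr => k _; rewrite prednK //.
by rewrite muln_gt0 t0.
Qed.

Lemma yvec_eq s (b : 'I_s -> nat) m i :
  yvec b m i = \sum_(k < m) ((b i ^ (tau b i * k.+1))%:R)^-1.
Proof.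
rewrite /yvec big_add1 /= big_mkord; apply: eq_bigr => k _.
by rewrite mulnC.
Qed.

Lemma cnt_dt bi t m n : (0 < t)%N ->
  cnt bi (dt t) (m * t) n = (\sum_(k < m) (n %% bi ^ (t * k.+1) == cc bi t k))%N.
Proof.
move=> t0; rewrite /cnt.
rewrite (@reidx _ _ _ (fun p => nat_of_bool (n %% bi ^ p.+1 == cd bi (dt t) p)%N) t m) //.
apply: eq_bigr => k _; rewrite prednK //.
by rewrite muln_gt0 t0.
Qed.

Section Bp.
Variable s : nat.
Variable b : 'I_s -> nat.
Hypothesis b2 : forall i, (2 <= b i)%N.

Lemma bpos i : (0 < b i)%N.
Proof. by apply: (leq_trans _ (b2 i)). Qed.

Lemma Bpow_pos r : (0 < Bpow b r)%N.
Proof. by rewrite /Bpow prodn_gt0 // => i; rewrite expn_gt0 bpos. Qed.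

Lemma Bpow_split r i :
  Bpow b r = (b i ^ r i * \prod_(j < s | j != i) b j ^ r j)%N.
Proof. by rewrite /Bpow (bigD1 i). Qed.

Lemma dvd_rest r i j : i != j -> (b i ^ r i %| \prod_(l < s | l != j) b l ^ r l)%N.
Proof. by move=> ij; rewrite (bigD1 i) //= dvdn_mulr. Qed.

Lemma Bpow_div_pow r i :
  (Bpow b r %/ b i ^ r i = \prod_(j < s | j != i) b j ^ r j)%N.
Proof. by rewrite (Bpow_split r i) mulKn // expn_gt0 bpos. Qed.

Lemma Bpow_div_b r i : (0 < r i)%N ->
  (Bpow b r %/ b i = b i ^ (r i).-1 * \prod_(j < s | j != i) b j ^ r j)%N.
Proof.
move=> ri; rewrite (Bpow_split r i) -(prednK ri) expnS -mulnA mulKn ?bpos //.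
Qed.

Lemma dvd_div_pow r i j : i != j -> (b i ^ r i %| Bpow b r %/ b j ^ r j)%N.
Proof. by move=> ij; rewrite Bpow_div_pow dvd_rest. Qed.

Lemma dvd_div_b r i j : i != j -> (0 < r j)%N -> (b i ^ r i %| Bpow b r %/ b j)%N.
Proof. by move=> ij rj; rewrite Bpow_div_b // dvdn_mull // dvd_rest. Qed.

Lemma dvd_Bpow r i : (b i ^ r i %| Bpow b r)%N.
Proof. by rewrite (Bpow_split r i) dvdn_mulr. Qed.

Lemma Bpow_dvd r r' : (forall i, r i <= r' i)%N -> (Bpow b r %| Bpow b r')%N.
Proof.
move=> h; rewrite /Bpow; elim/big_ind2: _ => //.
  by move=> x1 x2 y1 y2; apply: dvdn_mul.
by move=> i _; rewrite dvdn_exp2l.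
Qed.
End Bp.

Lemma PoszS (I : Type) (r : seq I) (P : pred I) (F : I -> nat) :
  Posz (\sum_(i <- r | P i) F i)%N = \sum_(i <- r | P i) Posz (F i).
Proof. exact: (big_morph Posz PoszD (erefl _)). Qed.

Lemma dvdz_natE (d n : nat) : (Posz d %| Posz n)%Z = (d %| n)%N.
Proof. by rewrite dvdzE !absz_nat. Qed.

Lemma cd_recr b d p : cd b d p.+1 = (cd b d p + d p * b ^ p)%N.
Proof. by rewrite /cd big_ord_recr. Qed.

Lemma cd_lt b d p : (1 < b)%N -> (cd b d p < b ^ p)%N.
Proof.
move=> b1; elim: p => [|p IH]; first by rewrite /cd big_ord0.
rewrite cd_recr expnS.
have : (d p * b ^ p <= b ^ p)%N by case: (d p); rewrite ?mul1n ?mul0n.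
nia.
Qed.

Lemma cd_mod b d p X : (p <= X)%N ->
  (Posz (b ^ p) %| Posz (cd b d X) - Posz (cd b d p))%Z.
Proof.
move=> h; elim: X h => [|X IH]; first by rewrite leqn0 => /eqP ->; rewrite subrr dvdz0.
rewrite leq_eqVlt => /orP [/eqP -> | h]; first by rewrite subrr dvdz0.
rewrite cd_recr PoszD addrAC; apply: rpredD; first exact: IH.
by rewrite dvdz_natE dvdn_mull // dvdn_exp2l.
Qed.

Lemma S_eq bi t m : (0 < t)%N ->
  \sum_(1 <= j < m.+2) Posz (bi ^ (j * t - 1)) = Posz (cd bi (dt t) (m.+1 * t)).
Proof.
move=> t0; rewrite /cd.
rewrite (eq_bigr (fun q : 'I_(m.+1 * t) => if dt t q then bi ^ q else 0)%N); last first.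
  by move=> q _; case: (dt t q); rewrite ?mul1n ?mul0n.
rewrite -big_mkcond /= (@reidx _ _ _ (fun q => bi ^ q)%N t m.+1) //.
rewrite PoszS big_add1 /= big_mkord; apply: eq_bigr => k _.
by rewrite subn1 mulnC.
Qed.

Section NT.
Variable s : nat.
Variable b : 'I_s -> nat.
Variable M : 'I_s -> ('I_s -> nat) -> int.
Variable m : nat.
Hypothesis b2 : forall i, (2 <= b i)%N.
Hypothesis hM : Mspec b M.
Hypothesis tpos : forall i, (0 < tau b i)%N.

Lemma modz_diff (X : int) (Q q : nat) : (0 < Q)%N -> (q %| Q)%N ->
  (Posz q %| Posz (absz (X %% Posz Q)%Z) - X)%Z.
Proof.
move=> Q0 qQ.
have Qn : Posz Q != 0 by rewrite eqz_nat -lt0n.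
rewrite gez0_abs ?modz_ge0 //.
have -> : (X %% Posz Q)%Z - X = - ((X %/ Posz Q)%Z * Posz Q).
  by rewrite {2}(divz_eq X (Posz Q)); ring.
by rewrite rpredN dvdz_mull // dvdz_natE.
Qed.

Lemma lemE i (k : {ffun 'I_s -> 'I_m}) :
  (Posz (b i ^ tauk b (fun j => (k j).+1) i) %|
     Posz (ytilde b M m) + Posz (Acoef b M (fun j => (k j).+1)) - Posz (cc (b i) (tau b i) (k i)))%Z.
Proof.
set kk := (fun j => (k j).+1).
set r := tauk b kk.
have rpos : forall j, (0 < r j)%N by move=> j; rewrite /r /tauk muln_gt0 tpos.
set r' := taul b m.+1.
have rpos' : forall j, (0 < r' j)%N by move=> j; rewrite /r' /taul muln_gt0 tpos.
set q := (b i ^ r i)%N.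
set q' := (b i ^ r' i)%N.
set X := (- \sum_(j < s) M j r * (Bpow b r %/ b j)%N%:Z)%R.
set Y := (\sum_(j < s) M j r' * (Bpow b r' %/ b j ^ (tau b j * m.+1))%N%:Z
            * (\sum_(1 <= l < m.+2) (b j ^ (l * tau b j - 1))%N%:Z))%R.
have dA : (Posz q %| Posz (Acoef b M kk) - X)%Z.
  by apply: modz_diff; [apply: Bpow_pos | apply: dvd_Bpow].
have dY : (Posz q' %| Posz (ytilde b M m) - Y)%Z.
  by apply: modz_diff; [apply: Bpow_pos | apply: dvd_Bpow].
have qq' : (Posz q %| Posz q')%Z.
  by rewrite dvdz_natE dvdn_exp2l // /r /r' /tauk /taul leq_mul2l ltnS (ltnW (ltn_ord _)) orbT.
have dX : (Posz q %| X + Posz (b i ^ (r i).-1))%Z.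
  rewrite /X (bigD1 i) //= opprD addrAC.
  apply: rpredD; last first.
    rewrite rpredN; apply: rpred_sum => j ji.
    by apply: dvdz_mull; rewrite dvdz_natE; apply: dvd_div_b => //; rewrite eq_sym.
  have hm := hM r rpos i.
  rewrite eqz_mod_dvd in hm.
  rewrite (@Bpow_div_b _ _ b2 r i (rpos i)) -(@Bpow_div_pow _ _ b2 r i) PoszM.
  have -> : - (M i r * (Posz (b i ^ (r i).-1) * Posz (Bpow b r %/ b i ^ r i))) +
            Posz (b i ^ (r i).-1) =
            - (Posz (b i ^ (r i).-1) * (M i r * Posz (Bpow b r %/ b i ^ r i) - 1)) by ring.
  by rewrite rpredN dvdz_mull.
have dYS : (Posz q' %| Y - \sum_(1 <= l < m.+2) (b i ^ (l * tau b i - 1))%N%:Z)%Z.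
  rewrite /Y (bigD1 i) //= addrAC.
  apply: rpredD; last first.
    apply: rpred_sum => j ji.
    apply: dvdz_mulr; apply: dvdz_mull.
    by rewrite dvdz_natE; apply: dvd_div_pow => //; rewrite eq_sym.
  have hm := hM r' rpos' i.
  rewrite eqz_mod_dvd in hm.
  have -> : forall u v w : int, u * v * w - w = (u * v - 1) * w by move=> *; ring.
  exact: dvdz_mulr.
rewrite S_eq // in dYS.
have dS : (Posz q %| Posz (cd (b i) (dt (tau b i)) (m.+1 * tau b i))
                     - Posz (cd (b i) (dt (tau b i)) (r i)))%Z.
  by apply: cd_mod; rewrite /r /tauk /kk [X in (_ <= X)%N]mulnC leq_mul2l ltnS (ltnW (ltn_ord _)) orbT.
have cdr : cd (b i) (dt (tau b i)) (r i) = (cc (b i) (tau b i) (k i) + b i ^ (r i).-1)%N.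
  rewrite -{1}(prednK (rpos i)) cd_recr.
  have -> : dt (tau b i) (r i).-1 = true by rewrite /dt prednK // /r /tauk dvdn_mulr.
  by rewrite mul1n.
rewrite cdr PoszD in dS.
set a := Posz (ytilde b M m) in dY *.
set A := Posz (Acoef b M kk) in dA *.
set S := Posz (cd _ _ (m.+1 * tau b i)) in dYS dS.
set c := Posz (cc (b i) (tau b i) (k i)) in dS *.
set p := Posz (b i ^ (r i).-1) in dX dS.
have -> : a + A - c = (a - Y) + (Y - S) + (S - (c + p)) + (A - X) + (X + p) by ring.
apply: rpredD; last exact: dX.
apply: rpredD; last exact: dA.
apply: rpredD; last exact: dS.
apply: rpredD; apply: dvdz_trans qq' _; [exact: dY | exact: dYS].
Qed.
End NT.

Section StepD.
Variables Q A : nat.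
Hypothesis Q0 : (0 < Q)%N.
Hypothesis AQ : (A < Q)%N.

Definition g (t : nat) : rat := ((t %% Q == A)%N)%:R - (Q%:R)^-1.
Definition Sg (N : nat) : rat := \sum_(0 <= t < N) g t.

Lemma count_eq N : \sum_(0 <= t < N) (((t == A)%N)%:R : rat) = ((A < N)%N)%:R.
Proof.
elim: N => [|N IH]; first by rewrite big_geq.
rewrite big_nat_recr //= IH.
case: (ltngtP N A) => h.
- have e1 : (A < N)%N = false by lia.
  have e2 : (A < N.+1)%N = false by lia.
  have e3 : (N == A) = false by lia.
  by rewrite ?e1 ?e2 ?e3 ?addr0 ?add0r.
- have e1 : (A < N)%N = true by lia.
  have e2 : (A < N.+1)%N = true by lia.
  have e3 : (N == A) = false by lia.
  by rewrite ?e1 ?e2 ?e3 ?addr0 ?add0r.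
- have e1 : (A < N)%N = false by lia.
  have e2 : (A < N.+1)%N = true by lia.
  have e3 : (N == A) = true by lia.
  by rewrite ?e1 ?e2 ?e3 ?addr0 ?add0r.
Qed.

Lemma Sg_small N : (N <= Q)%N -> Sg N = ((A < N)%N)%:R - N%:R / Q%:R.
Proof.
move=> NQ; rewrite /Sg /g sumrB sumr_const_nat subn0 -count_eq.
congr (_ - _); last by rewrite mulr_natl.
apply: eq_big_nat => t /andP [_ h]; rewrite modn_small //.
exact: leq_trans h NQ.
Qed.

Lemma SgQ : Sg Q = 0.
Proof.
rewrite Sg_small // AQ mulfV ?subrr //.
by rewrite pnatr_eq0 -lt0n.
Qed.

Lemma Sg_per N : Sg (Q + N) = Sg N.
Proof.
rewrite /Sg (@big_cat_nat _ _ _ Q) ?leq_addr //= -/(Sg Q) SgQ add0r.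
rewrite -{1}(add0n Q) big_addn addnC addnK.
by apply: eq_bigr => t _; rewrite /g modnDr.
Qed.

Lemma Sg_perP P N : Sg (N + P * Q) = Sg N.
Proof.
elim: P => [|P IH]; first by rewrite mul0n addn0.
by rewrite mulSn addnCA Sg_per.
Qed.

Lemma sum_lt K : \sum_(1 <= N < K.+1) (((A < N)%N)%:R : rat) = (K - A)%N%:R.
Proof.
elim: K => [|K IH]; first by rewrite big_geq.
rewrite big_nat_recr //= IH -natrD; congr (_%:R).
by case: (ltnP A K.+1) => h /=; lia.
Qed.

Lemma sum_id K : \sum_(1 <= N < K.+1) (N%:R : rat) = (K * K.+1)%N%:R / 2%:R.
Proof.
elim: K => [|K IH]; first by rewrite big_geq // mul0n mul0r.
rewrite big_nat_recr //= IH.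
have -> : (K.+1 * K.+2 = K * K.+1 + 2 * K.+1)%N by lia.
by rewrite natrD natrM; field.
Qed.

Lemma sumSg_Q : \sum_(1 <= N < Q.+1) Sg N = (Q - A)%N%:R - (Q.+1)%:R / 2%:R.
Proof.
rewrite (eq_big_nat _ _ (F2 := fun N => ((A < N)%N)%:R - N%:R / Q%:R)); last first.
  by move=> N /andP [_ h]; rewrite Sg_small.
rewrite sumrB sum_lt -mulr_suml sum_id natrM.
have : (Q%:R : rat) != 0 by rewrite pnatr_eq0 -lt0n.
move=> hQ; congr (_ - _); field.
by rewrite hQ.
Qed.

Lemma sumSg_PQ P : \sum_(1 <= N < (P * Q).+1) Sg N = P%:R * \sum_(1 <= N < Q.+1) Sg N.
Proof.
elim: P => [|P IH]; first by rewrite mul0n big_geq // mul0r.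
rewrite (@big_cat_nat _ _ _ (P * Q).+1) //=; last by rewrite ltnS mulSn leq_addl.
rewrite IH -[(P * Q).+1]add1n big_addn.
have -> : ((P.+1 * Q).+1 - P * Q = Q.+1)%N by lia.
rewrite (eq_bigr (fun N => Sg N)); last by move=> N _; rewrite Sg_perP.
by rewrite -natr1 mulrDl mul1r.
Qed.

Lemma stepD (P a : nat) (I : nat -> bool) : (0 < P)%N ->
  (forall t, I (a + t)%N = (t %% Q == A)%N) ->
  ((P * Q)%N%:R)^-1 * \sum_(1 <= N < (P * Q).+1)
      \sum_(a <= n < a + N) (((nat_of_bool (I n))%:R : rat) - (Q%:R)^-1)
  = 2%:R^-1 - A%:R / Q%:R - (2%:R * Q%:R)^-1.
Proof.
move=> P0 hI.
rewrite (eq_bigr (fun N => Sg N)); last first.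
  move=> N _; rewrite -{1}(add0n a) big_addn addnC addnK /Sg.
  by apply: eq_bigr => t _; rewrite addnC hI.
rewrite sumSg_PQ sumSg_Q.
have hQ : (Q%:R : rat) != 0 by rewrite pnatr_eq0 -lt0n.
have hP : (P%:R : rat) != 0 by rewrite pnatr_eq0 -lt0n.
rewrite natrB; last exact: ltnW.
rewrite natrM -(natr1 Q). field.
by rewrite hP hQ.
Qed.
End StepD.

Lemma modn_dvdz (x y d : nat) : (y < d)%N ->
  (x %% d == y)%N = (Posz d %| Posz x - Posz y)%Z.
Proof.
move=> yd.
by rewrite -eqz_mod_dvd !modz_nat eqz_nat (modn_small yd).
Qed.

Lemma coprime_prod_seq (I : Type) (r : seq I) (q : I -> nat) x :
  all (fun j => coprime x (q j)) r -> coprime x (\prod_(j <- r) q j).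
Proof.
elim: r => [|j r IH]; first by rewrite big_nil coprimen1.
by rewrite big_cons /= coprimeMr => /andP [-> /IH].
Qed.

Lemma crt_seq (I : eqType) (r : seq I) (q : I -> nat) (z : int) :
  uniq r -> (forall i j, i \in r -> j \in r -> i != j -> coprime (q i) (q j)) ->
  (Posz (\prod_(i <- r) q i) %| z)%Z = all (fun i => (Posz (q i) %| z)%Z) r.
Proof.
elim: r => [|j r IH]; first by rewrite big_nil dvd1z.
move=> /= /andP [jr ur] hc.
rewrite big_cons PoszM Gauss_dvdz; last first.
  rewrite /coprimez /gcdz !absz_nat eqz_nat.
  apply: coprime_prod_seq; apply/allP => i ir; apply: hc.
  - by rewrite inE eqxx.
  - by rewrite inE ir orbT.
  - by apply: contraNneq jr => ->.
rewrite IH //.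
move=> i k ir kr; apply: hc; by rewrite inE ?ir ?kr orbT.
Qed.

Lemma prod_ind (I : Type) (r : seq I) (P : pred I) :
  \prod_(i <- r) (((P i) : nat)%:R : rat) = ((all P r) : nat)%:R.
Proof.
elim: r => [|j r IH]; first by rewrite big_nil.
by rewrite big_cons IH /=; case: (P j); rewrite ?mul1r ?mul0r.
Qed.

Lemma totient_le n : (1 < n)%N -> (totient n <= n.-1)%N.
Proof.
move=> n1; rewrite totient_count_coprime big_ltn ?(ltnW n1) //.
rewrite /coprime gcdn0 (_ : (n == 1)%N = false) ?add0n; last by lia.
apply: (@leq_trans (\sum_(1 <= d < n) 1)%N).
  by apply: leq_sum => d _; case: (_ == _).
by rewrite sum_nat_const_nat muln1 subn1.
Qed.

Section Tau.
Variable s : nat.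
Variable b : 'I_s -> nat.
Hypothesis s2 : (2 <= s)%N.
Hypothesis b2 : forall i, (2 <= b i)%N.
Hypothesis bc : forall i j, i != j -> coprime (b i) (b j).

Lemma Bexc_eq i : Bexc b i = (\prod_(j < s | j != i) b j)%N.
Proof.
rewrite /Bexc /Bprod (bigD1 i) //= mulKn //.
exact: (leq_trans _ (b2 i)).
Qed.

Lemma Bexc_ge2 i : (2 <= Bexc b i)%N.
Proof.
rewrite Bexc_eq.
have hj : exists j : 'I_s, j != i.
  case: (altP (nat_of_ord i =P 0%N)) => hi.
    exists (Ordinal (leq_trans (ltnSn 1) s2)).
    by apply/eqP => /(congr1 val) /=; rewrite hi.
  exists (Ordinal (leq_trans (ltnSn 0) (ltnW s2))).
  by apply/eqP => /(congr1 val) /= h; rewrite -h in hi.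
case: hj => j ji.
rewrite (bigD1 j) //=.
apply: (leq_trans (b2 j)); apply: leq_pmulr.
rewrite prodn_gt0 // => l; exact: (leq_trans _ (b2 l)).
Qed.

Lemma coprime_Bexc i : coprime (b i) (Bexc b i).
Proof.
rewrite Bexc_eq big_mkcond /=.
apply: coprime_prod_seq; apply/allP => j _.
case: ifP => ji; last by rewrite coprimen1.
by apply: bc; rewrite eq_sym.
Qed.

Lemma tau_pos i : (0 < tau b i)%N.
Proof.
rewrite /tau.
set l := [seq k <- _ | _].
have hin : totient (Bexc b i) \in l.
  rewrite mem_filter Euler_exp_totient ?coprime_Bexc // eqxx /=.
  rewrite mem_iota.
  have := @totient_le _ (Bexc_ge2 i).
  have := totient_gt0 (Bexc b i).
  have := Bexc_ge2 i. lia.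
have hall : all (fun k => 0 < k)%N l.
  apply/allP => k; rewrite mem_filter mem_iota => /andP [_ /andP [h _]] //.
case: l hin hall => [|x l'] //= _ /andP [] //.
Qed.
End Tau.

Section Main.
Variable s : nat.
Variable b : 'I_s -> nat.
Variable M : 'I_s -> ('I_s -> nat) -> int.
Variable m : nat.
Hypothesis s2 : (2 <= s)%N.
Hypothesis b2 : forall i, (2 <= b i)%N.
Hypothesis bc : forall i j, i != j -> coprime (b i) (b j).
Hypothesis hM : Mspec b M.

Let tp : forall i, (0 < tau b i)%N := @tau_pos _ _ s2 b2 bc.

Definition qf (k : {ffun 'I_s -> 'I_m}) i : nat := (b i ^ (tau b i * (k i).+1))%N.
Definition cf (k : {ffun 'I_s -> 'I_m}) i : nat := cc (b i) (tau b i) (k i).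
Definition If (k : {ffun 'I_s -> 'I_m}) (n : nat) : bool :=
  all (fun i => (n %% qf k i == cf k i)%N) (index_enum 'I_s).

Lemma ind_i i n :
  ((nat_of_bool (radinv (b i) n < yvec b m i))%:R : rat) =
  \sum_(k < m) ((nat_of_bool (n %% b i ^ (tau b i * k.+1) == cc (b i) (tau b i) k)%N)%:R).
Proof.
rewrite yvec_eq -yd_dt // key_cnt // cnt_dt //.
by rewrite natr_sum.
Qed.

Lemma ind_all n :
  (if [forall i, (0 <= halton b n i) && (halton b n i < yvec b m i)] then 1 else 0 : rat)
  = \sum_(k : {ffun 'I_s -> 'I_m}) ((nat_of_bool (If k n))%:R).
Proof.
have -> : (if [forall i, (0 <= halton b n i) && (halton b n i < yvec b m i)] then 1 else 0 : rat)
   = \prod_i ((nat_of_bool (radinv (b i) n < yvec b m i))%:R : rat).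
  case: forallP => h.
    rewrite big1 // => i _; have := h i; rewrite /halton => /andP [_ ->] //.
  have [i hi] : exists i, ~~ ((0 <= halton b n i) && (halton b n i < yvec b m i)).
    by apply/existsP; apply/negP => /forallP.
  rewrite (bigD1 i) //=.
  move: hi; rewrite /halton radinv_ge0 /= => /negbTE ->.
  by rewrite mul0r.
rewrite (eq_bigr _ (fun i _ => ind_i i n)).
rewrite bigA_distr_bigA /=; apply: eq_bigr => k _.
by rewrite /If prod_ind.
Qed.

Lemma prod_y :
  \prod_i yvec b m i = \sum_(k : {ffun 'I_s -> 'I_m})
        ((Bpow b (tauk b (fun i => (k i).+1)))%:R)^-1.
Proof.
rewrite (eq_bigr _ (fun i _ => @yvec_eq _ b m i)) bigA_distr_bigA /=.
apply: eq_bigr => k _.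
by rewrite /Bpow natr_prod -prodfV.
Qed.

Lemma If_shift (k : {ffun 'I_s -> 'I_m}) t :
  If k (ytilde b M m + t)%N =
  (t %% Bpow b (tauk b (fun i => (k i).+1)) == Acoef b M (fun i => (k i).+1))%N.
Proof.
set kk := (fun i => (k i).+1).
have Q0 : (0 < Bpow b (tauk b kk))%N by apply: Bpow_pos.
have AQ : (Acoef b M kk < Bpow b (tauk b kk))%N.
  rewrite -ltz_nat /Acoef gez0_abs ?modz_ge0 ?ltz_pmod ?ltz_nat //.
  by rewrite eqz_nat -lt0n.
rewrite modn_dvdz //.
rewrite /Bpow crt_seq ?index_enum_uniq //; last first.
  by move=> i j _ _ ij; apply: coprimeXl; apply: coprimeXr; apply: bc.
rewrite /If; apply: eq_in_all => i _.
rewrite modn_dvdz; last first.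
  rewrite /cf /qf /cc.
  apply: (leq_trans (cd_lt _ _ _ (b2 i))).
  by rewrite leq_exp2l ?leq_pred.
have hE := @lemE _ b M m b2 hM tp i k.
have -> : Posz (ytilde b M m + t) - Posz (cf k i) =
          (Posz t - Posz (Acoef b M kk)) +
          (Posz (ytilde b M m) + Posz (Acoef b M kk) - Posz (cf k i)).
  by rewrite PoszD; ring.
by rewrite rpredDr.
Qed.

Theorem main_res :
  alpha b M m =
  \sum_(k : {ffun 'I_s -> 'I_m})
     (let kk := fun i => (k i).+1 in
      let Bk := (Bpow b (tauk b kk))%:R : rat in
      2%:R^-1 - (Acoef b M kk)%:R / Bk - (2%:R * Bk)^-1).
Proof.
rewrite /alpha /Delta /=.
set L := Bpow b (taul b m).
set a := ytilde b M m.
under eq_bigr => N _.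
  under eq_bigr => n _ do rewrite ind_all prod_y -sumrB.
  rewrite exchange_big /=.
  over.
rewrite exchange_big /= mulr_sumr; apply: eq_bigr => k _.
set kk := (fun i => (k i).+1).
set Q := Bpow b (tauk b kk).
have QL : (Q %| L)%N.
  apply: Bpow_dvd => i; rewrite /tauk /taul /kk leq_mul2l ltn_ord orbT //.
have L0 : (0 < L)%N by apply: Bpow_pos.
have Q0 : (0 < Q)%N by apply: Bpow_pos.
have AQ : (Acoef b M kk < Q)%N.
  rewrite -ltz_nat /Acoef gez0_abs ?modz_ge0 ?ltz_pmod ?ltz_nat //.
  by rewrite eqz_nat -lt0n.
have eL : L = (L %/ Q * Q)%N by rewrite divnK.
have P0 : (0 < L %/ Q)%N by rewrite divn_gt0 // dvdn_leq.
rewrite eL.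
apply: (@stepD Q (Acoef b M kk) Q0 AQ (L %/ Q) a (If k) P0).
exact: If_shift.
Qed.
End Main.

Theorem lemma4p4 (s : nat) (b : 'I_s -> nat) (M : 'I_s -> ('I_s -> nat) -> int)
    (m : nat) :
  (2 <= s)%N ->
  (forall i, (2 <= b i)%N) ->
  (forall i j, i != j -> coprime (b i) (b j)) ->
  Mspec b M ->
  (Bprod b <= m)%N ->
  alpha b M m =
  \sum_(k : {ffun 'I_s -> 'I_m})
     (let kk := fun i => (k i).+1 in
      let Bk := (Bpow b (tauk b kk))%:R : rat in
      2%:R^-1 - (Acoef b M kk)%:R / Bk - (2%:R * Bk)^-1).
Proof.
move=> s2 b2 bc hM _.
exact: (@main_res s b M m s2 b2 bc hM).
Qed.
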